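(* Let $\Omega\subset\mathbb{R}^3$ be open, $T>0$, and let $A:[0,T]\times\Omega\to\mathbb{T}$ and $\gamma:[0,T]\times\Omega\to\mathbb{S}$ be sufficiently smooth (classical) fields solving $$\operatorname{div} A=0,\qquad A_t+\operatorname{curl} S\gamma=0,\qquad S\gamma_t-\operatorname{sym}\operatorname{curl} A=0,\qquad \operatorname{div}\operatorname{div} S\gamma=0 .$$ Let $A_0:=A(0)$ and $\beta(t):=\tfrac12\int_0^t\operatorname{div}S\gamma(s)\,ds+\operatorname{vskw}A_0$. Then $$\operatorname{div}S\gamma_t=2\operatorname{div}S\operatorname{def}\beta .$$
   Context: $\mathbb{M}$ is the space of real $3\times3$ matrices, $\mathbb{S}$ the symmetric ones, $\mathbb{T}$ the trace-free ones. For $M\in\mathbb{M}$: $S(M):=M^\top-\operatorname{tr}(M)I$; $\operatorname{sym}M$ is the symmetric part; $(\operatorname{vskw}M)_i:=-\tfrac12\epsilon_{ijk}M_{jk}$ (Levi-Civita symbol, summation convention). Differential operators act column-wise on matrix fields: $(\operatorname{curl}M)_{ij}=\epsilon_{ikl}\partial_kM_{lj}$, $(\operatorname{div}M)_i=\partial_jM_{ji}$; for a vector field $v$, $(\operatorname{curl}v)_i=\epsilon_{ijk}\partial_jv_k$, $(\operatorname{grad}v)_{ij}=\partial_iv_j$, $\operatorname{def}v:=\operatorname{sym}\operatorname{grad}v$; $\operatorname{div}\operatorname{div}\sigma:=\operatorname{div}(\operatorname{div}\sigma)$. Subscript $t$ denotes time derivative. *)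

(* Defs.v *)
From Stdlib Require Import Reals Lra.
From Coquelicot Require Import Coquelicot.
Open Scope R_scope.

Inductive idx : Type := I0 | I1 | I2.

Definition idx_eq_dec (i j : idx) : {i = j} + {i <> j}.
Proof. decide equality. Defined.

Definition sum3 (f : idx -> R) : R := f I0 + f I1 + f I2.

Definition pt := idx -> R.
Definition vec := idx -> R.
Definition mat := idx -> idx -> R.

Definition levi (i j k : idx) : R :=
  match i, j, k with
  | I0, I1, I2 => 1 | I1, I2, I0 => 1 | I2, I0, I1 => 1
  | I0, I2, I1 => -1 | I2, I1, I0 => -1 | I1, I0, I2 => -1
  | _, _, _ => 0
  end.

Definition kron (i j : idx) : R := if idx_eq_dec i j then 1 else 0.
Definition mtr (M : mat) : R := sum3 (fun i => M i i).
Definition Sop (M : mat) : mat := fun i j => M j i - mtr M * kron i j.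
Definition msym (M : mat) : mat := fun i j => (M i j + M j i) / 2.
Definition vskw (M : mat) : vec :=
  fun i => - (1/2) * sum3 (fun j => sum3 (fun k => levi i j k * M j k)).

Definition sfield := R -> pt -> R.
Definition vfield := R -> pt -> vec.
Definition mfield := R -> pt -> mat.

Definition upd (x : pt) (k : idx) (s : R) : pt :=
  fun j => if idx_eq_dec k j then s else x j.

Definition dsp (k : idx) (f : sfield) : sfield :=
  fun t x => Derive (fun s => f t (upd x k s)) (x k).
Definition dtime (f : sfield) : sfield :=
  fun t x => Derive (fun s => f s x) t.

(** Column-wise differential operators (as in the paper's conventions). *)
Definition mdiv (M : mfield) : vfield :=
  fun t x i => sum3 (fun j => dsp j (fun t x => M t x j i) t x).
Definition mcurl (M : mfield) : mfield :=
  fun t x i j => sum3 (fun k => sum3 (fun l =>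
     levi i k l * dsp k (fun t x => M t x l j) t x)).
Definition vdiv (v : vfield) : sfield :=
  fun t x => sum3 (fun i => dsp i (fun t x => v t x i) t x).
Definition vgrad (v : vfield) : mfield :=
  fun t x i j => dsp i (fun t x => v t x j) t x.
Definition vdef (v : vfield) : mfield := fun t x => msym (vgrad v t x).
Definition divdiv (M : mfield) : sfield := vdiv (mdiv M).
Definition mdt (M : mfield) : mfield :=
  fun t x i j => dtime (fun t x => M t x i j) t x.
Definition vdt (v : vfield) : vfield :=
  fun t x i => dtime (fun t x => v t x i) t x.

Definition Sf (M : mfield) : mfield := fun t x => Sop (M t x).
Definition symf (M : mfield) : mfield := fun t x => msym (M t x).

Definition open3 (O : pt -> Prop) : Prop :=
  forall x, O x -> exists eps, 0 < eps /\
    forall y, (forall i, Rabs (y i - x i) < eps) -> O y.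
Definition open4 (U : R -> pt -> Prop) : Prop :=
  forall t x, U t x -> exists eps, 0 < eps /\
    forall s y, Rabs (s - t) < eps -> (forall i, Rabs (y i - x i) < eps) -> U s y.

Definition cont_at (f : sfield) (t : R) (x : pt) : Prop :=
  forall eps, 0 < eps -> exists del, 0 < del /\
    forall s y, Rabs (s - t) < del -> (forall i, Rabs (y i - x i) < del) ->
      Rabs (f s y - f t x) < eps.

Inductive dir : Type := DT | DX (k : idx).
Definition pd (d : dir) (f : sfield) : sfield :=
  match d with DT => dtime f | DX k => dsp k f end.
Fixpoint pds (l : list dir) (f : sfield) : sfield :=
  match l with nil => f | cons d l' => pd d (pds l' f) end.

Definition smooth_on (U : R -> pt -> Prop) (f : sfield) : Prop :=
  forall (l : list dir) t x, U t x ->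
    cont_at (pds l f) t x /\
    ex_derive (fun s => pds l f s x) t /\
    (forall k, ex_derive (fun s => pds l f t (upd x k s)) (x k)).

(* Main.v *)
Require Import Defs.
From Stdlib Require Import Reals.
From Coquelicot Require Import Coquelicot.
Open Scope R_scope.
From Stdlib Require Import Lra List Permutation FunctionalExtensionality.
Import ListNotations.
Open Scope R_scope.

Lemma upd_at x k r : upd x k r k = r.
Proof. unfold upd; destruct (idx_eq_dec k k); congruence. Qed.
Lemma upd_ne x k r j : k <> j -> upd x k r j = x j.
Proof. intros; unfold upd; destruct (idx_eq_dec k j); congruence. Qed.
Lemma upd_upd x k a b : upd (upd x k a) k b = upd x k b.
Proof. apply functional_extensionality; intro j; unfold upd; destruct (idx_eq_dec k j); auto. Qed.
Lemma upd_self x k : upd x k (x k) = x.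
Proof. apply functional_extensionality; intro j; unfold upd; destruct (idx_eq_dec k j); subst; auto. Qed.
Lemma upd_comm x k m a b : k <> m -> upd (upd x k a) m b = upd (upd x m b) k a.
Proof. intro H; apply functional_extensionality; intro j; unfold upd;
  destruct (idx_eq_dec m j), (idx_eq_dec k j); subst; congruence. Qed.

Definition mvt (d : dir) (t r : R) : R := match d with DT => r | DX _ => t end.
Definition mvx (d : dir) (x : pt) (r : R) : pt := match d with DT => x | DX k => upd x k r end.
Definition crd (d : dir) (t : R) (x : pt) : R := match d with DT => t | DX k => x k end.

Lemma pd_eq d f t x : pd d f t x = Derive (fun r => f (mvt d t r) (mvx d x r)) (crd d t x).
Proof. destruct d; reflexivity. Qed.

Lemma mvt_same d t u z : mvt d (mvt d t u) z = mvt d t z.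
Proof. destruct d; reflexivity. Qed.
Lemma mvx_same d x u z : mvx d (mvx d x u) z = mvx d x z.
Proof. destruct d; simpl; auto using upd_upd. Qed.
Lemma crd_same d t x u : crd d (mvt d t u) (mvx d x u) = u.
Proof. destruct d; simpl; auto using upd_at. Qed.
Lemma crd_other d1 d2 t x u : d1 <> d2 -> crd d2 (mvt d1 t u) (mvx d1 x u) = crd d2 t x.
Proof. intro H; destruct d1, d2; simpl; auto; try congruence. apply upd_ne; congruence. Qed.
Lemma mvt_crd d t x : mvt d t (crd d t x) = t.
Proof. destruct d; reflexivity. Qed.
Lemma mvx_crd d t x : mvx d x (crd d t x) = x.
Proof. destruct d; simpl; auto using upd_self. Qed.
Lemma mvt_comm d1 d2 t u v : d1 <> d2 -> mvt d1 (mvt d2 t v) u = mvt d2 (mvt d1 t u) v.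
Proof. intro H; destruct d1, d2; simpl; auto; congruence. Qed.
Lemma mvx_comm d1 d2 x u v : d1 <> d2 -> mvx d1 (mvx d2 x v) u = mvx d2 (mvx d1 x u) v.
Proof. intro H; destruct d1, d2; simpl; auto. apply upd_comm; congruence. Qed.

Definition near (e t : R) (x : pt) (s : R) (y : pt) : Prop :=
  Rabs (s - t) < e /\ forall i, Rabs (y i - x i) < e.

Lemma near_refl e t x : 0 < e -> near e t x t x.
Proof. intros; split; [|intros]; rewrite Rminus_diag, Rabs_R0; auto. Qed.

Lemma near_mv e t x s y d r : near e t x s y -> Rabs (r - crd d t x) < e ->
  near e t x (mvt d s r) (mvx d y r).
Proof.
  intros [H1 H2] Hr; destruct d as [|k]; simpl in *; split; auto.
  intro i; unfold upd; destruct (idx_eq_dec k i); subst; auto.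
Qed.

Lemma ball_R (c e r : R) : ball c e r -> Rabs (r - c) < e.
Proof. intro H; exact H. Qed.

Lemma open4_loc U t x d : open4 U -> U t x ->
  locally (crd d t x) (fun r => U (mvt d t r) (mvx d x r)).
Proof.
  intros HU Ht; destruct (HU t x Ht) as [e [He H]].
  exists (mkposreal e He); intros r Hr; apply ball_R in Hr; simpl in Hr.
  destruct (near_mv e t x t x d r (near_refl e t x He) Hr) as [A B]; auto.
Qed.

Lemma pd_loc U d F G t x : open4 U -> U t x ->
  (forall s y, U s y -> F s y = G s y) -> pd d F t x = pd d G t x.
Proof.
  intros HU Ht HFG; rewrite !pd_eq; apply Derive_ext_loc.
  generalize (open4_loc U t x d HU Ht); apply filter_imp; intros r Hr; auto.
Qed.

Lemma pds_loc U l F G t x : open4 U -> U t x ->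
  (forall s y, U s y -> F s y = G s y) -> pds l F t x = pds l G t x.
Proof.
  intros HU Ht HFG; revert t x Ht; induction l as [|d l IH]; intros t x Ht; simpl; auto.
  apply (pd_loc U); auto.
Qed.

Lemma pds_app l l' f : pds l (pds l' f) = pds (l ++ l') f.
Proof. induction l as [|d l IH]; simpl; auto. rewrite IH; auto. Qed.

Lemma smooth_ex U f l d t x : smooth_on U f -> U t x ->
  ex_derive (fun r => pds l f (mvt d t r) (mvx d x r)) (crd d t x).
Proof. intros Hf Ht; destruct (Hf l t x Ht) as [_ [H1 H2]]; destruct d; simpl; auto. Qed.

Lemma smooth_ex_mv U f l d t x u : smooth_on U f -> U (mvt d t u) (mvx d x u) ->
  ex_derive (fun r => pds l f (mvt d t r) (mvx d x r)) u.
Proof.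
  intros Hf Ht. generalize (smooth_ex U f l d _ _ Hf Ht). rewrite crd_same.
  apply ex_derive_ext; intro r; rewrite mvt_same, mvx_same; auto.
Qed.

Lemma smooth_pds U f l : smooth_on U f -> smooth_on U (pds l f).
Proof. intros Hf l' t x Ht; rewrite pds_app; apply Hf; auto. Qed.

Lemma pd_at_mv d g t x u :
  Derive (fun z => g (mvt d t z) (mvx d x z)) u = pd d g (mvt d t u) (mvx d x u).
Proof. rewrite pd_eq, crd_same; apply Derive_ext; intro r; rewrite mvt_same, mvx_same; auto. Qed.

Lemma exd_lin a b (f g : R -> R) x : ex_derive f x -> ex_derive g x ->
  ex_derive (fun r => a * f r + b * g r) x.
Proof.
  intros [df Hf] [dg Hg]. exists (a * df + b * dg).
  apply (is_derive_plus (fun r => a * f r) (fun r => b * g r)).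
  apply (is_derive_scal f x a df Hf). apply (is_derive_scal g x b dg Hg).
Qed.

Lemma cont_lin a b f g t x : cont_at f t x -> cont_at g t x ->
  cont_at (fun s y => a * f s y + b * g s y) t x.
Proof.
  intros Hf Hg eps He.
  set (k := Rabs a + Rabs b + 1).
  assert (Hk : 0 < k) by (unfold k; generalize (Rabs_pos a) (Rabs_pos b); lra).
  destruct (Hf (eps / k)) as [d1 [Hd1 H1]]. apply Rdiv_lt_0_compat; auto.
  destruct (Hg (eps / k)) as [d2 [Hd2 H2]]. apply Rdiv_lt_0_compat; auto.
  exists (Rmin d1 d2); split. apply Rmin_pos; auto.
  intros s y Hs Hy.
  assert (A1 := H1 s y (Rlt_le_trans _ _ _ Hs (Rmin_l _ _)) (fun i => Rlt_le_trans _ _ _ (Hy i) (Rmin_l _ _))).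
  assert (A2 := H2 s y (Rlt_le_trans _ _ _ Hs (Rmin_r _ _)) (fun i => Rlt_le_trans _ _ _ (Hy i) (Rmin_r _ _))).
  replace (a * f s y + b * g s y - (a * f t x + b * g t x)) with (a * (f s y - f t x) + b * (g s y - g t x)) by ring.
  eapply Rle_lt_trans. apply Rabs_triang. rewrite !Rabs_mult.
  assert (E : eps = k * (eps / k)) by (field; lra).
  set (q := eps / k) in *.
  assert (Hq : 0 < q) by (unfold q; apply Rdiv_lt_0_compat; auto).
  assert (B1 : Rabs a * Rabs (f s y - f t x) <= Rabs a * q) by (apply Rmult_le_compat_l; [apply Rabs_pos|lra]).
  assert (B2 : Rabs b * Rabs (g s y - g t x) <= Rabs b * q) by (apply Rmult_le_compat_l; [apply Rabs_pos|lra]).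
  assert (E2 : eps = Rabs a * q + Rabs b * q + q) by (rewrite E; unfold k; ring).
  lra.
Qed.

Lemma cont_ext U f g t x : open4 U -> U t x -> (forall s y, U s y -> f s y = g s y) ->
  cont_at f t x -> cont_at g t x.
Proof.
  intros HU Ht Hfg Hf eps He. destruct (Hf eps He) as [d [Hd H]].
  destruct (HU t x Ht) as [e [He' HU']].
  exists (Rmin d e); split. apply Rmin_pos; auto.
  intros s y Hs Hy. rewrite <- !Hfg; auto.
  apply H. eapply Rlt_le_trans; eauto; apply Rmin_l. intro i; eapply Rlt_le_trans; eauto; apply Rmin_l.
  apply HU'. eapply Rlt_le_trans; eauto; apply Rmin_r. intro i; eapply Rlt_le_trans; eauto; apply Rmin_r.
Qed.

Lemma pds_lin U a b f g l t x : open4 U -> smooth_on U f -> smooth_on U g -> U t x ->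
  pds l (fun s y => a * f s y + b * g s y) t x = a * pds l f t x + b * pds l g t x.
Proof.
  intros HU Hf Hg; revert t x; induction l as [|d l IH]; intros t x Ht; simpl; auto.
  rewrite (pd_loc U d _ (fun s y => a * pds l f s y + b * pds l g s y)); auto.
  rewrite !pd_eq. rewrite Derive_plus, !Derive_scal; auto.
  apply ex_derive_scal; apply (smooth_ex U f l d t x Hf Ht).
  apply ex_derive_scal; apply (smooth_ex U g l d t x Hg Ht).
Qed.

Lemma smooth_lin U a b f g : open4 U -> smooth_on U f -> smooth_on U g ->
  smooth_on U (fun s y => a * f s y + b * g s y).
Proof.
  intros HU Hf Hg l t x Ht.
  assert (E : forall s y, U s y -> a * pds l f s y + b * pds l g s y = pds l (fun s y => a * f s y + b * g s y) s y).
  { intros; rewrite (pds_lin U); auto. }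
  split; [|split].
  - apply (cont_ext U _ _ t x HU Ht E). apply cont_lin; [apply Hf|apply Hg]; auto.
  - apply (ex_derive_ext_loc (fun r => a * pds l f r x + b * pds l g r x)).
    generalize (open4_loc U t x DT HU Ht); apply filter_imp; intros r Hr; simpl in Hr; auto.
    apply exd_lin; [apply Hf|apply Hg]; auto.
  - intro k. apply (ex_derive_ext_loc (fun r => a * pds l f t (upd x k r) + b * pds l g t (upd x k r))).
    generalize (open4_loc U t x (DX k) HU Ht); apply filter_imp; intros r Hr; simpl in Hr; auto.
    apply exd_lin; [apply Hf|apply Hg]; auto.
Qed.

Definition dir_eq_dec (a b : dir) : {a = b} + {a <> b}.
Proof. decide equality. apply idx_eq_dec. Defined.

Lemma c2d_ext (f g : R -> R -> R) x y : (forall u v, f u v = g u v) ->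
  continuity_2d_pt f x y -> continuity_2d_pt g x y.
Proof.
  intros H. replace g with f; auto.
  apply functional_extensionality; intro u; apply functional_extensionality; intro v; auto.
Qed.

Lemma near_mv2 e t x d1 d2 u v : 0 < e -> Rabs (u - crd d1 t x) < e -> Rabs (v - crd d2 t x) < e ->
  near e t x (mvt d2 (mvt d1 t u) v) (mvx d2 (mvx d1 x u) v).
Proof. intros He Hu Hv. apply near_mv; auto. apply near_mv; auto. apply near_refl; auto. Qed.

Lemma cont_c2d g t x d1 d2 : d1 <> d2 -> cont_at g t x ->
  continuity_2d_pt (fun u v => g (mvt d2 (mvt d1 t u) v) (mvx d2 (mvx d1 x u) v))
     (crd d1 t x) (crd d2 t x).
Proof.
  intros Hne Hg eps. destruct (Hg eps (cond_pos eps)) as [de [Hde H]].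
  exists (mkposreal de Hde); intros u v Hu Hv; simpl in *.
  rewrite (mvt_crd d1 t x), (mvx_crd d1 t x), (mvt_crd d2 t x), (mvx_crd d2 t x).
  destruct (near_mv2 de t x d1 d2 u v Hde Hu Hv) as [A B]. apply H; auto.
Qed.

Lemma pd_swap U f d1 d2 t x : open4 U -> smooth_on U f -> U t x ->
  pd d1 (pd d2 f) t x = pd d2 (pd d1 f) t x.
Proof.
  intros HU Hf Ht.
  destruct (dir_eq_dec d1 d2) as [->|Hne]; [reflexivity|].
  assert (Hne' : d2 <> d1) by congruence.
  set (Pt := fun u v => mvt d2 (mvt d1 t u) v).
  set (Px := fun u v => mvx d2 (mvx d1 x u) v).
  assert (C1 : forall u v, mvt d1 (mvt d2 t v) u = Pt u v) by (intros; unfold Pt; apply mvt_comm; auto).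
  assert (C2 : forall u v, mvx d1 (mvx d2 x v) u = Px u v) by (intros; unfold Px; apply mvx_comm; auto).
  assert (F1 : forall g z v, Derive (fun w => g (Pt z w) (Px z w)) v = pd d2 g (Pt z v) (Px z v)).
  { intros; unfold Pt, Px; apply pd_at_mv. }
  assert (F2 : forall g u w, Derive (fun z => g (Pt z w) (Px z w)) u = pd d1 g (Pt u w) (Px u w)).
  { intros. rewrite <- C1, <- C2. rewrite <- pd_at_mv. apply Derive_ext; intro z; rewrite C1, C2; auto. }
  set (x0 := crd d1 t x). set (y0 := crd d2 t x).
  set (phi := fun u v => f (Pt u v) (Px u v)).
  assert (L : pd d1 (pd d2 f) t x = Derive (fun z => Derive (fun w => phi z w) y0) x0).
  { rewrite pd_eq. apply Derive_ext; intro z. rewrite pd_eq, crd_other by auto. reflexivity. }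
  assert (R : pd d2 (pd d1 f) t x = Derive (fun z => Derive (fun w => phi w z) x0) y0).
  { rewrite pd_eq. apply Derive_ext; intro z. rewrite pd_eq, crd_other by auto.
    apply Derive_ext; intro w. unfold phi; rewrite C1, C2; auto. }
  rewrite L, R. clear L R.
  destruct (HU t x Ht) as [e [He HUe]].
  assert (HP : forall u v, Rabs (u - x0) < e -> Rabs (v - y0) < e -> U (Pt u v) (Px u v)).
  { intros u v Hu Hv. destruct (near_mv2 e t x d1 d2 u v He Hu Hv) as [A B]. apply HUe; auto. }
  apply Schwarz.
  - exists (mkposreal e He); intros u v Hu Hv; simpl in Hu, Hv.
    assert (HUP := HP u v Hu Hv).
    split; [|split; [|split]].
    + apply (ex_derive_ext (fun z => pds [] f (mvt d1 (mvt d2 t v) z) (mvx d1 (mvx d2 x v) z))).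
      { intro z; unfold phi; rewrite C1, C2; reflexivity. }
      apply (smooth_ex_mv U); auto. rewrite C1, C2; auto.
    + apply (smooth_ex_mv U f [] d2 (mvt d1 t u) (mvx d1 x u)); auto.
    + apply (ex_derive_ext (fun z => pds [d2] f (mvt d1 (mvt d2 t v) z) (mvx d1 (mvx d2 x v) z))).
      { intro z; unfold phi; rewrite F1, C1, C2; reflexivity. }
      apply (smooth_ex_mv U); auto. rewrite C1, C2; auto.
    + apply (ex_derive_ext (fun z => pds [d1] f (mvt d2 (mvt d1 t u) z) (mvx d2 (mvx d1 x u) z))).
      { intro z; unfold phi; rewrite F2; reflexivity. }
      apply (smooth_ex_mv U); auto.
  - apply (c2d_ext (fun u v => pds [d1; d2] f (Pt u v) (Px u v))).
    { intros u v; unfold phi. change (pd d1 (pd d2 f) (Pt u v) (Px u v) = Derive (fun z => Derive (fun w => f (Pt z w) (Px z w)) v) u).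
      rewrite <- F2. apply Derive_ext; intro z. rewrite F1; reflexivity. }
    apply cont_c2d; auto. apply Hf; auto.
  - apply (c2d_ext (fun u v => pds [d2; d1] f (Pt u v) (Px u v))).
    { intros u v; unfold phi. change (pd d2 (pd d1 f) (Pt u v) (Px u v) = Derive (fun z => Derive (fun w => f (Pt w z) (Px w z)) u) v).
      rewrite <- F1. apply Derive_ext; intro z. rewrite F2; reflexivity. }
    apply cont_c2d; auto. apply Hf; auto.
Qed.

Lemma pds_perm U f l l' t x : open4 U -> smooth_on U f -> Permutation l l' -> U t x ->
  pds l f t x = pds l' f t x.
Proof.
  intros HU Hf HP; revert t x; induction HP as [|d l1 l2 HP IH|d e l|l1 l2 l3 HP1 IH1 HP2 IH2]; intros t0 x0 Ht; simpl; auto.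
  - apply (pd_loc U); auto.
  - apply (pd_swap U); auto. apply smooth_pds; auto.
  - rewrite IH1, IH2; auto.
Qed.

Definition dkey (d : dir) : nat := match d with DX I0 => 0 | DX I1 => 1 | DX I2 => 2 | DT => 3 end%nat.
Fixpoint dins (d : dir) (l : list dir) : list dir :=
  match l with [] => [d] | e :: l' => if Nat.leb (dkey d) (dkey e) then d :: l else e :: dins d l' end.
Fixpoint dsort (l : list dir) : list dir := match l with [] => [] | d :: l' => dins d (dsort l') end.

Lemma dins_perm d l : Permutation (d :: l) (dins d l).
Proof.
  induction l as [|e l IH]; simpl; auto.
  destruct (Nat.leb (dkey d) (dkey e)); auto.
  eapply perm_trans. apply perm_swap. auto.
Qed.
Lemma dsort_perm l : Permutation l (dsort l).
Proof.
  induction l as [|d l IH]; simpl; auto.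
  eapply perm_trans. apply perm_skip; eauto. apply dins_perm.
Qed.

Lemma pds_sort U f l l' t x : open4 U -> smooth_on U f -> dsort l = l' -> U t x ->
  pds l f t x = pds l' f t x.
Proof. intros HU Hf <- Ht. apply (pds_perm U); auto. apply dsort_perm. Qed.

Lemma cont_time h s x : cont_at h s x -> continuous (fun r => h r x) s.
Proof.
  intro H. apply filterlim_locally. intro eps.
  destruct (H eps (cond_pos eps)) as [d [Hd Hd']].
  exists (mkposreal d Hd); intros r Hr. apply Hd'. exact Hr.
  intro i; rewrite Rminus_diag, Rabs_R0; auto.
Qed.

Lemma ex_RInt_atom U f l t x : smooth_on U f -> 0 <= t ->
  (forall s, 0 <= s <= t -> U s x) -> ex_RInt (fun s => pds l f s x) 0 t.
Proof.
  intros Hf Ht HU. apply (ex_RInt_continuous (V:=R_CompleteNormedModule)). intros z Hz.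
  rewrite Rmin_left, Rmax_right in Hz by lra.
  apply cont_time. apply Hf; auto.
Qed.

Lemma RInt_lin2 (F G : R -> R) a b t : ex_RInt F 0 t -> ex_RInt G 0 t ->
  RInt (fun s => a * F s + b * G s) 0 t = a * RInt F 0 t + b * RInt G 0 t.
Proof.
  intros HF HG. apply (is_RInt_unique (V:=R_CompleteNormedModule)).
  apply (is_RInt_plus (fun s => a * F s) (fun s => b * G s)).
  apply (is_RInt_scal F 0 t a). apply (RInt_correct (V:=R_CompleteNormedModule)); auto.
  apply (is_RInt_scal G 0 t b). apply (RInt_correct (V:=R_CompleteNormedModule)); auto.
Qed.

Lemma RInt_pds_lin U a b f g l t x : open4 U -> smooth_on U f -> smooth_on U g -> 0 <= t ->
  (forall s, 0 <= s <= t -> U s x) ->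
  RInt (fun s => pds l (fun s y => a * f s y + b * g s y) s x) 0 t =
  a * RInt (fun s => pds l f s x) 0 t + b * RInt (fun s => pds l g s x) 0 t.
Proof.
  intros HU Hf Hg Ht HUs. rewrite <- RInt_lin2 by (apply (ex_RInt_atom U); auto).
  apply RInt_ext. intros s Hs. rewrite Rmin_left, Rmax_right in Hs by lra.
  apply (pds_lin U); auto. apply HUs; lra.
Qed.

Lemma RInt_pds_sort U f l l' t x : open4 U -> smooth_on U f -> dsort l = l' -> 0 <= t ->
  (forall s, 0 <= s <= t -> U s x) ->
  RInt (fun s => pds l f s x) 0 t = RInt (fun s => pds l' f s x) 0 t.
Proof.
  intros HU Hf Hl Ht HUs. apply RInt_ext. intros s Hs. rewrite Rmin_left, Rmax_right in Hs by lra.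
  apply (pds_sort U); auto. apply HUs; lra.
Qed.

Lemma FTC_atom U f l t x : smooth_on U f -> 0 <= t -> (forall s, 0 <= s <= t -> U s x) ->
  pds l f t x = pds l f 0 x + RInt (fun s => pds (DT :: l) f s x) 0 t.
Proof.
  intros Hf Ht HU.
  change (RInt (fun s => pds (DT :: l) f s x) 0 t) with (RInt (Derive (fun s => pds l f s x)) 0 t).
  rewrite RInt_Derive. ring.
  - intros s Hs. rewrite Rmin_left, Rmax_right in Hs by lra. apply Hf; auto.
  - intros s Hs. rewrite Rmin_left, Rmax_right in Hs by lra.
    change (continuous (fun s => pds (DT :: l) f s x) s). apply cont_time. apply Hf; auto.
Qed.

Fixpoint spl (l : list dir) : Prop :=
  match l with [] => True | DX _ :: l' => spl l' | DT :: _ => False end.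

Lemma open3_loc Om x k : open3 Om -> Om x -> locally (x k) (fun r => Om (upd x k r)).
Proof.
  intros HO Hx. destruct (HO x Hx) as [e [He H]].
  exists (mkposreal e He); intros r Hr; apply ball_R in Hr; simpl in Hr.
  apply H. intro i; unfold upd; destruct (idx_eq_dec k i); subst; auto.
  rewrite Rminus_diag, Rabs_R0; auto.
Qed.

Lemma pds_loc_sp Om l F G s x : open3 Om -> Om x -> spl l ->
  (forall y, Om y -> F s y = G s y) -> pds l F s x = pds l G s x.
Proof.
  intros HO Hx Hl HFG; revert x Hx; induction l as [|d l IH]; intros x Hx; simpl; auto.
  destruct d as [|k]; [contradiction|]. simpl in Hl.
  unfold dsp. apply Derive_ext_loc.
  generalize (open3_loc Om x k HO Hx); apply filter_imp; intros r Hr; auto.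
Qed.

Lemma pds_zero l t x : pds l (fun _ _ => 0) t x = 0.
Proof.
  revert t x; induction l as [|d l IH]; intros t x; simpl; auto.
  rewrite pd_eq. rewrite (Derive_ext _ (fun _ => 0)); auto. apply Derive_const.
Qed.

Lemma DUI U Om T H t x k : open3 Om -> (forall s y, 0 <= s <= T -> Om y -> U s y) ->
  smooth_on U H -> 0 <= t <= T -> Om x ->
  is_derive (fun r => RInt (fun s => H s (upd x k r)) 0 t) (x k) (RInt (fun s => pds [DX k] H s x) 0 t).
Proof.
  intros HO HU HH Ht Hx.
  apply (is_derive_RInt_param (fun u s => H s (upd x k u)) 0 t (x k)).
  - generalize (open3_loc Om x k HO Hx); apply filter_imp; intros r Hr s Hs.
    rewrite Rmin_left, Rmax_right in Hs by lra.
    apply (smooth_ex_mv U H [] (DX k) s x r HH). simpl. apply HU; auto; lra.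
  - intros s Hs. rewrite Rmin_left, Rmax_right in Hs by lra.
    apply (c2d_ext (fun u v => pds [DX k] H v (upd x k u))).
    { intros u v. symmetry. apply (pd_at_mv (DX k) H v x u). }
    intro eps. destruct (HH [DX k] s x (HU s x ltac:(lra) Hx)) as [Hc _].
    destruct (Hc eps (cond_pos eps)) as [d [Hd Hd']].
    exists (mkposreal d Hd); intros u v Hu Hv; simpl in Hu, Hv.
    rewrite upd_self. apply Hd'; auto.
    intro i; unfold upd; destruct (idx_eq_dec k i); subst; auto. rewrite Rminus_diag, Rabs_R0; auto.
  - generalize (open3_loc Om x k HO Hx); apply filter_imp; intros r Hr.
    apply (ex_RInt_atom U H [] t (upd x k r) HH); try lra.
    intros s Hs; apply HU; auto; lra.
Qed.


Definition RI (F : R -> R) (t : R) : R := RInt F 0 t.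

Lemma fext2 (F G : sfield) : (forall s y, F s y = G s y) -> F = G.
Proof. intro H; apply functional_extensionality; intro s; apply functional_extensionality; auto. Qed.


Lemma pds_add U l f g t x : open4 U -> smooth_on U f -> smooth_on U g -> U t x ->
  pds l (fun s y => f s y + g s y) t x = pds l f t x + pds l g t x.
Proof. intros. replace (fun s y => f s y + g s y) with (fun s y => 1 * f s y + 1 * g s y) by (apply fext2; intros; ring).
  rewrite (pds_lin U) by auto; ring. Qed.

Lemma smooth_add U f g : open4 U -> smooth_on U f -> smooth_on U g -> smooth_on U (fun s y => f s y + g s y).
Proof. intros. replace (fun s y => f s y + g s y) with (fun s y => 1 * f s y + 1 * g s y) by (apply fext2; intros; ring).
  apply smooth_lin; auto. Qed.

Lemma RI_add U l f g t x : open4 U -> smooth_on U f -> smooth_on U g -> 0 <= t -> (forall s, 0 <= s <= t -> U s x) ->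
  RI (fun s => pds l (fun s y => f s y + g s y) s x) t = RI (fun s => pds l f s x) t + RI (fun s => pds l g s x) t.
Proof. intros. unfold RI. replace (fun s y => f s y + g s y) with (fun s y => 1 * f s y + 1 * g s y) by (apply fext2; intros; ring).
  rewrite (RInt_pds_lin U) by auto; ring. Qed.

Lemma pds_sub U l f g t x : open4 U -> smooth_on U f -> smooth_on U g -> U t x ->
  pds l (fun s y => f s y - g s y) t x = pds l f t x - pds l g t x.
Proof. intros. replace (fun s y => f s y - g s y) with (fun s y => 1 * f s y + (-1) * g s y) by (apply fext2; intros; ring).
  rewrite (pds_lin U) by auto; ring. Qed.

Lemma smooth_sub U f g : open4 U -> smooth_on U f -> smooth_on U g -> smooth_on U (fun s y => f s y - g s y).
Proof. intros. replace (fun s y => f s y - g s y) with (fun s y => 1 * f s y + (-1) * g s y) by (apply fext2; intros; ring).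
  apply smooth_lin; auto. Qed.

Lemma RI_sub U l f g t x : open4 U -> smooth_on U f -> smooth_on U g -> 0 <= t -> (forall s, 0 <= s <= t -> U s x) ->
  RI (fun s => pds l (fun s y => f s y - g s y) s x) t = RI (fun s => pds l f s x) t - RI (fun s => pds l g s x) t.
Proof. intros. unfold RI. replace (fun s y => f s y - g s y) with (fun s y => 1 * f s y + (-1) * g s y) by (apply fext2; intros; ring).
  rewrite (RInt_pds_lin U) by auto; ring. Qed.

Lemma pds_opp U l f t x : open4 U -> smooth_on U f -> U t x ->
  pds l (fun s y => - f s y) t x = - pds l f t x.
Proof. intros. replace (fun s y => - f s y) with (fun s y => (-1) * f s y + 0 * f s y) by (apply fext2; intros; ring).
  rewrite (pds_lin U) by auto; ring. Qed.

Lemma smooth_opp U f : open4 U -> smooth_on U f -> smooth_on U (fun s y => - f s y).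
Proof. intros. replace (fun s y => - f s y) with (fun s y => (-1) * f s y + 0 * f s y) by (apply fext2; intros; ring).
  apply smooth_lin; auto. Qed.

Lemma RI_opp U l f t x : open4 U -> smooth_on U f -> 0 <= t -> (forall s, 0 <= s <= t -> U s x) ->
  RI (fun s => pds l (fun s y => - f s y) s x) t = - RI (fun s => pds l f s x) t.
Proof. intros. unfold RI. replace (fun s y => - f s y) with (fun s y => (-1) * f s y + 0 * f s y) by (apply fext2; intros; ring).
  rewrite (RInt_pds_lin U) by auto; ring. Qed.

Lemma pds_mull U l c f t x : open4 U -> smooth_on U f -> U t x ->
  pds l (fun s y => c * f s y) t x = c * pds l f t x.
Proof. intros. replace (fun s y => c * f s y) with (fun s y => c * f s y + 0 * f s y) by (apply fext2; intros; ring).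
  rewrite (pds_lin U) by auto; ring. Qed.

Lemma smooth_mull U c f : open4 U -> smooth_on U f -> smooth_on U (fun s y => c * f s y).
Proof. intros. replace (fun s y => c * f s y) with (fun s y => c * f s y + 0 * f s y) by (apply fext2; intros; ring).
  apply smooth_lin; auto. Qed.

Lemma RI_mull U l c f t x : open4 U -> smooth_on U f -> 0 <= t -> (forall s, 0 <= s <= t -> U s x) ->
  RI (fun s => pds l (fun s y => c * f s y) s x) t = c * RI (fun s => pds l f s x) t.
Proof. intros. unfold RI. replace (fun s y => c * f s y) with (fun s y => c * f s y + 0 * f s y) by (apply fext2; intros; ring).
  rewrite (RInt_pds_lin U) by auto; ring. Qed.

Lemma pds_mulr U l c f t x : open4 U -> smooth_on U f -> U t x ->
  pds l (fun s y => f s y * c) t x = pds l f t x * c.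
Proof. intros. replace (fun s y => f s y * c) with (fun s y => c * f s y + 0 * f s y) by (apply fext2; intros; ring).
  rewrite (pds_lin U) by auto; ring. Qed.

Lemma smooth_mulr U c f : open4 U -> smooth_on U f -> smooth_on U (fun s y => f s y * c).
Proof. intros. replace (fun s y => f s y * c) with (fun s y => c * f s y + 0 * f s y) by (apply fext2; intros; ring).
  apply smooth_lin; auto. Qed.

Lemma RI_mulr U l c f t x : open4 U -> smooth_on U f -> 0 <= t -> (forall s, 0 <= s <= t -> U s x) ->
  RI (fun s => pds l (fun s y => f s y * c) s x) t = RI (fun s => pds l f s x) t * c.
Proof. intros. unfold RI. replace (fun s y => f s y * c) with (fun s y => c * f s y + 0 * f s y) by (apply fext2; intros; ring).
  rewrite (RInt_pds_lin U) by auto; ring. Qed.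

Lemma pds_div U l c f t x : open4 U -> smooth_on U f -> U t x ->
  pds l (fun s y => f s y / c) t x = pds l f t x / c.
Proof. intros. replace (fun s y => f s y / c) with (fun s y => (/c) * f s y + 0 * f s y) by (apply fext2; intros; unfold Rdiv; ring).
  rewrite (pds_lin U) by auto; unfold Rdiv; ring. Qed.

Lemma smooth_div U c f : open4 U -> smooth_on U f -> smooth_on U (fun s y => f s y / c).
Proof. intros. replace (fun s y => f s y / c) with (fun s y => (/c) * f s y + 0 * f s y) by (apply fext2; intros; unfold Rdiv; ring).
  apply smooth_lin; auto. Qed.

Lemma RI_div U l c f t x : open4 U -> smooth_on U f -> 0 <= t -> (forall s, 0 <= s <= t -> U s x) ->
  RI (fun s => pds l (fun s y => f s y / c) s x) t = RI (fun s => pds l f s x) t / c.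
Proof. intros. unfold RI. replace (fun s y => f s y / c) with (fun s y => (/c) * f s y + 0 * f s y) by (apply fext2; intros; unfold Rdiv; ring).
  rewrite (RInt_pds_lin U) by auto; unfold Rdiv; ring. Qed.

Lemma pds_mul0l l f t x : pds l (fun s y => 0 * f s y) t x = 0.
Proof. replace (fun s y => 0 * f s y) with (fun (_ : R) (_ : pt) => 0) by (apply fext2; intros; ring). apply pds_zero. Qed.

Lemma RI_mul0l l f t x : RI (fun s => pds l (fun s y => 0 * f s y) s x) t = 0.
Proof. unfold RI. replace (fun s y => 0 * f s y) with (fun (_ : R) (_ : pt) => 0) by (apply fext2; intros; ring).
  rewrite (RInt_ext _ (fun _ : R => 0)). rewrite RInt_const. unfold scal; simpl; unfold mult; simpl; ring.
  intros; apply pds_zero. Qed.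

Lemma pds_mul0r l f t x : pds l (fun s y => f s y * 0) t x = 0.
Proof. replace (fun s y => f s y * 0) with (fun (_ : R) (_ : pt) => 0) by (apply fext2; intros; ring). apply pds_zero. Qed.

Lemma RI_mul0r l f t x : RI (fun s => pds l (fun s y => f s y * 0) s x) t = 0.
Proof. unfold RI. replace (fun s y => f s y * 0) with (fun (_ : R) (_ : pt) => 0) by (apply fext2; intros; ring).
  rewrite (RInt_ext _ (fun _ : R => 0)). rewrite RInt_const. unfold scal; simpl; unfold mult; simpl; ring.
  intros; apply pds_zero. Qed.

Ltac fold_pds :=
  repeat match goal with
  | |- context [dsp ?k ?F] => change (dsp k F) with (pds [DX k] F)
  | |- context [dtime ?F] => change (dtime F) with (pds [DT] F)
  end.

Ltac merge_pds :=
  repeat match goal with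
  | |- context [pds ?l (fun t y => pds ?l' ?F t y)] =>
      let l2 := eval cbv in (l ++ l') in change (pds l (fun t y => pds l' F t y)) with (pds l2 F)
  | |- context [pds ?l (pds ?l' ?F)] =>
      let l2 := eval cbv in (l ++ l') in change (pds l (pds l' F)) with (pds l2 F)
  end.

Ltac solve_smooth :=
  repeat (first [ assumption
    | match goal with H : forall i j, smooth_on _ (fun t x => _ t x i j) |- _ => apply H end
    | apply smooth_pds
    | apply smooth_add | apply smooth_sub | apply smooth_opp | apply smooth_mull | apply smooth_mulr | apply smooth_div ]).

Ltac side := solve [ assumption | solve_smooth ].

Ltac lin_step :=
  match goal with HU : open4 ?U |- _ =>
  first [ rewrite pds_mul0l | rewrite pds_mul0r | rewrite RI_mul0l | rewrite RI_mul0r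
        | rewrite (pds_add U) by side | rewrite (pds_sub U) by side | rewrite (pds_opp U) by side
        | rewrite (pds_mull U) by side | rewrite (pds_mulr U) by side | rewrite (pds_div U) by side
        | rewrite (RI_add U) by side | rewrite (RI_sub U) by side | rewrite (RI_opp U) by side
        | rewrite (RI_mull U) by side | rewrite (RI_mulr U) by side | rewrite (RI_div U) by side ] end.

Ltac expand := fold_pds; repeat (merge_pds; lin_step); merge_pds.

Definition Fb (gamma : mfield) (b : idx) : sfield := fun s y => mdiv (Sf gamma) s y b.
Definition Vb (A : mfield) (b : idx) : sfield := fun s y => vskw (A s y) b.
Definition betaf (A gamma : mfield) : vfield := fun t x i =>
    (1/2) * RInt (fun s => mdiv (Sf gamma) s x i) 0 t + vskw (A 0 x) i.

Lemma smooth_Fb U gamma b : open4 U -> (forall i j, smooth_on U (fun t x => gamma t x i j)) ->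
  smooth_on U (Fb gamma b).
Proof. intros HU HG. cbv beta delta [Fb mdiv Sf Sop mtr sum3]. fold_pds. solve_smooth. Qed.

Lemma smooth_Vb U A b : open4 U -> (forall i j, smooth_on U (fun t x => A t x i j)) ->
  smooth_on U (Vb A b).
Proof. intros HU HA. cbv beta delta [Vb vskw sum3]. solve_smooth. Qed.

Lemma Derive_Smsym (w : idx -> idx -> R -> R) r0 j i : (forall a b, ex_derive (w a b) r0) ->
  Derive (fun r => Sop (msym (fun a b => w a b r)) j i) r0 = Sop (msym (fun a b => Derive (w a b) r0)) j i.
Proof.
  intros H. unfold Sop, msym, mtr, sum3.
  apply is_derive_unique. auto_derive.
  repeat match goal with |- _ /\ _ => split end; try apply H; auto.
  repeat match goal with |- context [Derive (fun x => w ?a ?b x) r0] =>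
    change (Derive (fun x => w a b x) r0) with (Derive (w a b) r0) end.
  unfold Rdiv; ring.
Qed.

Lemma vgrad_beta Om U T A gamma t y a b : open3 Om -> open4 U ->
  (forall s y, 0 <= s <= T -> Om y -> U s y) ->
  (forall i j, smooth_on U (fun t x => A t x i j)) ->
  (forall i j, smooth_on U (fun t x => gamma t x i j)) ->
  0 <= t <= T -> Om y ->
  vgrad (betaf A gamma) t y a b =
  (1/2) * RI (fun s => pds [DX a] (Fb gamma b) s y) t + pds [DX a] (Vb A b) 0 y.
Proof.
  intros HO HU HUc HA HG Ht Hy.
  assert (D1 := DUI U Om T (Fb gamma b) t y a HO HUc (smooth_Fb U gamma b HU HG) Ht Hy).
  assert (E2 : ex_derive (fun r => vskw (A 0 (upd y a r)) b) (y a)).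
  { exact (smooth_ex U (Vb A b) [] (DX a) 0 y (smooth_Vb U A b HU HA) (HUc 0 y ltac:(lra) Hy)). }
  unfold vgrad, dsp, betaf.
  rewrite Derive_plus.
  - rewrite Derive_scal. f_equal. f_equal. unfold RI. apply is_derive_unique. exact D1.
  - apply ex_derive_scal. eexists; exact D1.
  - exact E2.
Qed.

Lemma W_deriv Om U T A gamma t x j a b : open3 Om -> open4 U ->
  (forall s y, 0 <= s <= T -> Om y -> U s y) ->
  (forall i j, smooth_on U (fun t x => A t x i j)) ->
  (forall i j, smooth_on U (fun t x => gamma t x i j)) ->
  0 <= t <= T -> Om x ->
  is_derive (fun r => (1/2) * RI (fun s => pds [DX a] (Fb gamma b) s (upd x j r)) t
                      + pds [DX a] (Vb A b) 0 (upd x j r)) (x j)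
    ((1/2) * RI (fun s => pds [DX j; DX a] (Fb gamma b) s x) t + pds [DX j; DX a] (Vb A b) 0 x).
Proof.
  intros HO HU HUc HA HG Ht Hx.
  apply (is_derive_plus (fun r => (1/2) * RI (fun s => pds [DX a] (Fb gamma b) s (upd x j r)) t)
                        (fun r => pds [DX a] (Vb A b) 0 (upd x j r))).
  - apply (is_derive_scal (fun r => RI (fun s => pds [DX a] (Fb gamma b) s (upd x j r)) t)).
    unfold RI. apply (DUI U Om T (pds [DX a] (Fb gamma b)) t x j HO HUc); auto.
    apply smooth_pds, smooth_Fb; auto.
  - apply Derive_correct.
    exact (smooth_ex U (pds [DX a] (Vb A b)) [] (DX j) 0 x (smooth_pds U _ _ (smooth_Vb U A b HU HA)) (HUc 0 x ltac:(lra) Hx)).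
Qed.

Lemma rhs_j Om U T A gamma t x j i : open3 Om -> open4 U ->
  (forall s y, 0 <= s <= T -> Om y -> U s y) ->
  (forall i j, smooth_on U (fun t x => A t x i j)) ->
  (forall i j, smooth_on U (fun t x => gamma t x i j)) ->
  0 <= t <= T -> Om x ->
  dsp j (fun t y => Sf (vdef (betaf A gamma)) t y j i) t x =
  Sop (msym (fun a b => (1/2) * RI (fun s => pds [DX j; DX a] (Fb gamma b) s x) t
                         + pds [DX j; DX a] (Vb A b) 0 x)) j i.
Proof.
  intros HO HU HUc HA HG Ht Hx.
  transitivity (dsp j (fun t y => Sop (msym (fun a b => (1/2) * RI (fun s => pds [DX a] (Fb gamma b) s y) t
                         + pds [DX a] (Vb A b) 0 y)) j i) t x).
  - change (pds [DX j] (fun t y => Sf (vdef (betaf A gamma)) t y j i) t x =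
            pds [DX j] (fun t y => Sop (msym (fun a b => (1/2) * RI (fun s => pds [DX a] (Fb gamma b) s y) t
                         + pds [DX a] (Vb A b) 0 y)) j i) t x).
    apply (pds_loc_sp Om); simpl; auto. intros y Hy. unfold Sf, vdef.
    replace (vgrad (betaf A gamma) t y) with (fun a b => (1/2) * RI (fun s => pds [DX a] (Fb gamma b) s y) t
                         + pds [DX a] (Vb A b) 0 y); auto.
    apply functional_extensionality; intro a; apply functional_extensionality; intro b.
    symmetry; apply (vgrad_beta Om U T); auto.
  - unfold dsp.
    rewrite (Derive_Smsym (fun a b r => (1/2) * RI (fun s => pds [DX a] (Fb gamma b) s (upd x j r)) t
                         + pds [DX a] (Vb A b) 0 (upd x j r))).
    + do 2 f_equal. apply functional_extensionality; intro a; apply functional_extensionality; intro b.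
      apply is_derive_unique. apply (W_deriv Om U T); auto.
    + intros a b. eexists. apply (W_deriv Om U T); auto.
Qed.

Lemma FTC_RI U f l t x : smooth_on U f -> 0 <= t -> (forall s, 0 <= s <= t -> U s x) ->
  pds l f t x = pds l f 0 x + RI (fun s => pds (DT :: l) f s x) t.
Proof. intros. unfold RI. apply (FTC_atom U); auto. Qed.

Lemma RI_sort U f l l' t x : open4 U -> smooth_on U f -> dsort l = l' -> 0 <= t ->
  (forall s, 0 <= s <= t -> U s x) ->
  RI (fun s => pds l f s x) t = RI (fun s => pds l' f s x) t.
Proof. intros. unfold RI. apply (RInt_pds_sort U); auto. Qed.

Lemma sym_pt Om T (gamma : mfield) l a b s x : open3 Om -> Om x -> 0 <= s <= T -> spl l ->
  (forall t x, 0 <= t <= T -> Om x -> forall i j, gamma t x i j = gamma t x j i) ->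
  pds l (fun t x => gamma t x a b) s x = pds l (fun t x => gamma t x b a) s x.
Proof. intros HO Hx Hs Hl Hsym. apply (pds_loc_sp Om); auto. Qed.

Lemma sym_RI Om T (gamma : mfield) l a b t x : open3 Om -> Om x -> 0 <= t <= T -> spl l ->
  (forall t x, 0 <= t <= T -> Om x -> forall i j, gamma t x i j = gamma t x j i) ->
  RI (fun s => pds l (fun t x => gamma t x a b) s x) t = RI (fun s => pds l (fun t x => gamma t x b a) s x) t.
Proof.
  intros HO Hx Ht Hl Hsym. unfold RI. apply RInt_ext. intros s Hs.
  rewrite Rmin_left, Rmax_right in Hs by lra. apply (sym_pt Om T); auto; lra.
Qed.

Lemma Aeq_RI Om T (A gamma : mfield) l l0 a b t x : open3 Om -> Om x -> 0 <= t <= T ->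
  l = l0 ++ [DT] -> spl l0 ->
  (forall t x, 0 <= t <= T -> Om x -> forall i j, mdt A t x i j + mcurl (Sf gamma) t x i j = 0) ->
  RI (fun s => pds l (fun t x => A t x a b) s x) t =
  RI (fun s => pds l0 (fun t y => - mcurl (Sf gamma) t y a b) s x) t.
Proof.
  intros HO Hx Ht -> Hl HAeq. unfold RI. apply RInt_ext. intros s Hs.
  rewrite Rmin_left, Rmax_right in Hs by lra.
  rewrite <- pds_app. apply (pds_loc_sp Om); auto. intros y Hy.
  simpl. specialize (HAeq s y ltac:(lra) Hy a b). unfold mdt in HAeq. lra.
Qed.

Lemma lhs_loc Om T (A gamma : mfield) t x j i : open3 Om -> Om x -> 0 <= t <= T ->
  (forall t x, 0 <= t <= T -> Om x -> forall i j, mdt (Sf gamma) t x i j - symf (mcurl A) t x i j = 0) ->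
  dsp j (fun t y => mdt (Sf gamma) t y j i) t x = dsp j (fun t y => symf (mcurl A) t y j i) t x.
Proof.
  intros HO Hx Ht H.
  change (pds [DX j] (fun t y => mdt (Sf gamma) t y j i) t x = pds [DX j] (fun t y => symf (mcurl A) t y j i) t x).
  apply (pds_loc_sp Om); simpl; auto. intros y Hy. specialize (H t y Ht Hy j i). lra.
Qed.

Lemma divA_pt Om T (A : mfield) x k l : open3 Om -> Om x -> 0 <= T ->
  (forall t x, 0 <= t <= T -> Om x -> forall i, mdiv A t x i = 0) ->
  pds [DX k] (fun t y => mdiv A t y l) 0 x = 0.
Proof.
  intros HO Hx HT H. rewrite (pds_loc_sp Om _ _ (fun _ _ => 0)); auto.
  apply pds_zero. simpl; auto. intros y Hy. apply H; auto; lra.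
Qed.

Definition ikey (i : idx) : nat := match i with I0 => 0 | I1 => 1 | I2 => 2 end%nat.
Fixpoint endsT (l : list dir) : bool :=
  match l with [] => false | [DT] => true | _ :: l' => endsT l' end.

Ltac sort_all :=
  match goal with HU : open4 ?U |- _ =>
  repeat match goal with
  | |- context [RI (fun s => pds ?l ?f s ?x) ?t] =>
      let l' := eval cbv in (dsort l) in
      tryif constr_eq l l' then fail else rewrite (RI_sort U f l l' t x) by (reflexivity || side)
  | |- context [pds ?l ?f ?t ?x] =>
      let l' := eval cbv in (dsort l) in
      tryif constr_eq l l' then fail else rewrite (pds_sort U f l l' t x) by (reflexivity || side)
  end end.

Lemma Rplus_eq' a b a' b' : a = a' -> b = b' -> a + b = a' + b'.
Proof. intros; subst; auto. Qed.
Lemma Rminus_eq' a b a' b' : a = a' -> b = b' -> a - b = a' - b'.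
Proof. intros; subst; auto. Qed.
Lemma Rmult_eq' a b a' b' : a = a' -> b = b' -> a * b = a' * b'.
Proof. intros; subst; auto. Qed.
Lemma Rdiv_eq' a b a' b' : a = a' -> b = b' -> a / b = a' / b'.
Proof. intros; subst; auto. Qed.
Lemma Ropp_eq' a a' : a = a' -> - a = - a'.
Proof. intros; subst; auto. Qed.
Lemma impl_norm (P P' : R) (G : Prop) : P = P' -> (P' = 0 -> G) -> (P = 0 -> G).
Proof. intros -> H; auto. Qed.
Lemma goal_norm (L L' R' Rr : R) : L = L' -> Rr = R' -> L' = R' -> L = Rr.
Proof. intros -> -> ->; auto. Qed.

Ltac getU := match goal with HU : open4 ?U |- _ => U end.

Ltac nrm_base_pds :=
  let U := getU in
  lazymatch goal with |- pds ?l ?F ?t0 ?x0 = _ =>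
   tryif constr_eq t0 0%R then
     (let l' := eval cbv in (dsort l) in
      tryif constr_eq l l' then reflexivity
      else (eapply eq_trans; [apply (pds_sort U F l l' t0 x0); [assumption|solve_smooth|reflexivity|assumption] | reflexivity]))
   else
     (eapply eq_trans; [apply (FTC_RI U F l t0 x0); [solve_smooth|assumption|assumption]
                       | eapply Rplus_eq'; [nrm_base_pds | nrm_RI]])
  end
with nrm_base_RI :=
  let U := getU in
  lazymatch goal with |- RI (fun s => pds ?l ?F s ?x0) ?t0 = _ =>
    let l' := eval cbv in (dsort l) in
    tryif constr_eq l l' then nrm_base_RI2
    else (eapply eq_trans; [apply (RI_sort U F l l' t0 x0); [assumption|solve_smooth|reflexivity|assumption|assumption] | nrm_base_RI2])
  end
with nrm_base_RI2 :=
  lazymatch goal with |- RI (fun s => pds ?l (fun t x => ?g t x ?a ?b) s ?x0) ?t0 = _ =>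
    let e := eval cbv in (endsT l) in
    lazymatch e with
    | true =>
      let l0 := eval cbv in (removelast l) in
      eapply eq_trans;
        [ eapply (Aeq_RI _ _ _ _ l l0); [eassumption|eassumption|eassumption|reflexivity|cbv; exact I|eassumption]
        | cbv beta iota delta [mcurl Sf Sop mtr sum3 levi kron idx_eq_dec idx_rec idx_rect]; fold_pds; nrm_RI ]
    | false =>
      let c := eval cbv in (Nat.ltb (ikey b) (ikey a)) in
      lazymatch c with
      | true => eapply eq_trans; [ eapply sym_RI; [eassumption|eassumption|eassumption|cbv; exact I|eassumption] | reflexivity ]
      | false => reflexivity
      end
    end
  end
with nrm_pds :=
  let U := getU in
  match goal with
  | |- pds ?l (fun s y => 0 * @?f s y) ?t0 ?x0 = _ => apply pds_mul0l
  | |- pds ?l (fun s y => @?f s y * 0) ?t0 ?x0 = _ => apply pds_mul0r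
  | |- pds ?l (fun s y => @?f s y + @?g s y) ?t0 ?x0 = _ =>
     eapply eq_trans; [apply (pds_add U l f g t0 x0); [assumption|solve_smooth|solve_smooth|assumption]
                      | eapply Rplus_eq'; [nrm_pds|nrm_pds]]
  | |- pds ?l (fun s y => @?f s y - @?g s y) ?t0 ?x0 = _ =>
     eapply eq_trans; [apply (pds_sub U l f g t0 x0); [assumption|solve_smooth|solve_smooth|assumption]
                      | eapply Rminus_eq'; [nrm_pds|nrm_pds]]
  | |- pds ?l (fun s y => - @?f s y) ?t0 ?x0 = _ =>
     eapply eq_trans; [apply (pds_opp U l f t0 x0); [assumption|solve_smooth|assumption]
                      | eapply Ropp_eq'; nrm_pds]
  | |- pds ?l (fun s y => ?c * @?f s y) ?t0 ?x0 = _ =>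
     eapply eq_trans; [apply (pds_mull U l c f t0 x0); [assumption|solve_smooth|assumption]
                      | eapply Rmult_eq'; [reflexivity|nrm_pds]]
  | |- pds ?l (fun s y => @?f s y * ?c) ?t0 ?x0 = _ =>
     eapply eq_trans; [apply (pds_mulr U l c f t0 x0); [assumption|solve_smooth|assumption]
                      | eapply Rmult_eq'; [nrm_pds|reflexivity]]
  | |- pds ?l (fun s y => @?f s y / ?c) ?t0 ?x0 = _ =>
     eapply eq_trans; [apply (pds_div U l c f t0 x0); [assumption|solve_smooth|assumption]
                      | eapply Rdiv_eq'; [nrm_pds|reflexivity]]
  | |- pds ?l (fun s y => pds ?l' ?G s y) ?t0 ?x0 = _ =>
     let l2 := eval cbv in (l ++ l') in
     change (pds l (fun s y => pds l' G s y) t0 x0) with (pds l2 G t0 x0); nrm_pds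
  | |- pds ?l (pds ?l' ?G) ?t0 ?x0 = _ =>
     let l2 := eval cbv in (l ++ l') in
     change (pds l (pds l' G) t0 x0) with (pds l2 G t0 x0); nrm_pds
  | |- _ => nrm_base_pds
  end
with nrm_RI :=
  let U := getU in
  match goal with
  | |- RI (fun s => pds ?l (fun u y => 0 * @?f u y) s ?x0) ?t0 = _ => apply RI_mul0l
  | |- RI (fun s => pds ?l (fun u y => @?f u y * 0) s ?x0) ?t0 = _ => apply RI_mul0r
  | |- RI (fun s => pds ?l (fun u y => @?f u y + @?g u y) s ?x0) ?t0 = _ =>
     eapply eq_trans; [apply (RI_add U l f g t0 x0); [assumption|solve_smooth|solve_smooth|assumption|assumption]
                      | eapply Rplus_eq'; [nrm_RI|nrm_RI]]
  | |- RI (fun s => pds ?l (fun u y => @?f u y - @?g u y) s ?x0) ?t0 = _ =>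
     eapply eq_trans; [apply (RI_sub U l f g t0 x0); [assumption|solve_smooth|solve_smooth|assumption|assumption]
                      | eapply Rminus_eq'; [nrm_RI|nrm_RI]]
  | |- RI (fun s => pds ?l (fun u y => - @?f u y) s ?x0) ?t0 = _ =>
     eapply eq_trans; [apply (RI_opp U l f t0 x0); [assumption|solve_smooth|assumption|assumption]
                      | eapply Ropp_eq'; nrm_RI]
  | |- RI (fun s => pds ?l (fun u y => ?c * @?f u y) s ?x0) ?t0 = _ =>
     eapply eq_trans; [apply (RI_mull U l c f t0 x0); [assumption|solve_smooth|assumption|assumption]
                      | eapply Rmult_eq'; [reflexivity|nrm_RI]]
  | |- RI (fun s => pds ?l (fun u y => @?f u y * ?c) s ?x0) ?t0 = _ =>
     eapply eq_trans; [apply (RI_mulr U l c f t0 x0); [assumption|solve_smooth|assumption|assumption]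
                      | eapply Rmult_eq'; [nrm_RI|reflexivity]]
  | |- RI (fun s => pds ?l (fun u y => @?f u y / ?c) s ?x0) ?t0 = _ =>
     eapply eq_trans; [apply (RI_div U l c f t0 x0); [assumption|solve_smooth|assumption|assumption]
                      | eapply Rdiv_eq'; [nrm_RI|reflexivity]]
  | |- RI (fun s => pds ?l (fun u y => pds ?l' ?G u y) s ?x0) ?t0 = _ =>
     let l2 := eval cbv in (l ++ l') in
     change (RI (fun s => pds l (fun u y => pds l' G u y) s x0) t0) with (RI (fun s => pds l2 G s x0) t0); nrm_RI
  | |- RI (fun s => pds ?l (pds ?l' ?G) s ?x0) ?t0 = _ =>
     let l2 := eval cbv in (l ++ l') in
     change (RI (fun s => pds l (pds l' G) s x0) t0) with (RI (fun s => pds l2 G s x0) t0); nrm_RI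
  | |- _ => nrm_base_RI
  end.

Ltac nrm :=
  lazymatch goal with
  | |- ?a + ?b = _ => eapply Rplus_eq'; [nrm|nrm]
  | |- ?a - ?b = _ => eapply Rminus_eq'; [nrm|nrm]
  | |- ?a * ?b = _ => eapply Rmult_eq'; [nrm|nrm]
  | |- ?a / ?b = _ => eapply Rdiv_eq'; [nrm|nrm]
  | |- - ?a = _ => eapply Ropp_eq'; nrm
  | |- pds _ _ _ _ = _ => nrm_pds
  | |- RI _ _ = _ => nrm_RI
  | |- _ => reflexivity
  end.

Theorem lemma2p5
  (Omega : pt -> Prop) (T : R) (A gamma : mfield) (U : R -> pt -> Prop) :
  open3 Omega ->
  0 < T ->
  open4 U ->
  (forall t x, 0 <= t <= T -> Omega x -> U t x) ->
  (forall i j, smooth_on U (fun t x => A t x i j)) ->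
  (forall i j, smooth_on U (fun t x => gamma t x i j)) ->
  (forall t x, 0 <= t <= T -> Omega x -> mtr (A t x) = 0) ->
  (forall t x, 0 <= t <= T -> Omega x -> forall i j, gamma t x i j = gamma t x j i) ->
  (forall t x, 0 <= t <= T -> Omega x -> forall i, mdiv A t x i = 0) ->
  (forall t x, 0 <= t <= T -> Omega x -> forall i j,
      mdt A t x i j + mcurl (Sf gamma) t x i j = 0) ->
  (forall t x, 0 <= t <= T -> Omega x -> forall i j,
      mdt (Sf gamma) t x i j - symf (mcurl A) t x i j = 0) ->
  (forall t x, 0 <= t <= T -> Omega x -> divdiv (Sf gamma) t x = 0) ->
  let beta : vfield := fun t x i =>
    (1/2) * RInt (fun s => mdiv (Sf gamma) s x i) 0 t + vskw (A 0 x) i in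
  forall t x, 0 <= t <= T -> Omega x -> forall i,
    mdiv (mdt (Sf gamma)) t x i = 2 * mdiv (Sf (vdef beta)) t x i.
Proof.
  intros HO HT HU HUc HA HG Htr Hsym HdivA HAeq HGeq Hdd beta t x Ht Hx i.
  assert (HUtx : U t x) by (apply HUc; auto).
  assert (HU0 : U 0 x) by (apply HUc; auto; lra).
  assert (HUs : forall s, 0 <= s <= t -> U s x) by (intros; apply HUc; auto; lra).
  assert (Ht0 : 0 <= t) by lra.
  assert (L : mdiv (mdt (Sf gamma)) t x i = sum3 (fun j => dsp j (fun t y => symf (mcurl A) t y j i) t x)).
  { unfold mdiv, sum3. f_equal; [f_equal|]; apply (lhs_loc Omega T); auto. }
  assert (R : mdiv (Sf (vdef beta)) t x i = sum3 (fun j =>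
     Sop (msym (fun a b => (1/2) * RI (fun s => pds [DX j; DX a] (Fb gamma b) s x) t
                         + pds [DX j; DX a] (Vb A b) 0 x)) j i)).
  { change beta with (betaf A gamma). unfold mdiv, sum3. f_equal; [f_equal|]; apply (rhs_j Omega U T); auto. }
  rewrite L, R. clear L R.
  assert (HT0 : 0 <= T) by lra.
  assert (DA := fun k l => divA_pt Omega T A x k l HO Hx HT0 HdivA).
  generalize (DA I0 I0) (DA I0 I1) (DA I0 I2) (DA I1 I0) (DA I1 I1) (DA I1 I2) (DA I2 I0) (DA I2 I1) (DA I2 I2).
  clear DA.
  destruct i.
  all: cbv beta iota delta [sum3 symf msym mcurl levi kron idx_eq_dec idx_rec idx_rect Sop mtr Fb Vb vskw mdiv Sf].
  all: fold_pds.
  all: repeat (let H := fresh "H" in intro H;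
     match type of H with ?P = _ => let E := fresh "E" in eassert (E : P = _); [nrm|]; rewrite E in H; clear E end).
  all: match goal with |- ?L = ?R =>
     let E1 := fresh "E" in let E2 := fresh "E" in
     eassert (E1 : L = _); [nrm|]; eassert (E2 : R = _); [nrm|]; rewrite E1, E2; clear E1 E2 end.
  all: lra.
Qed.
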